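(* Let $A$ be a finite-dimensional Hopf algebra over $k$ (not necessarily semisimple), $\tau$ a Hopf automorphism of $A$ whose order divides the positive integer $m$. Let $\Lambda$ be a left integral of $A$ and $\lambda$ a right integral of $A^*$ with $\lambda(\Lambda)=1$. Then $$\nu_{m,\tau}(A)=\lambda\big(S(\Lambda)^{[m,\tau]}\big).$$
   Context: For $a\in A$ with $\Delta^{m-2}(a)=\sum a_1\otimes\cdots\otimes a_{m-1}$, define $P_{m-1,\tau}:A\to A$ by $P_{m-1,\tau}(a)=\sum(\tau^{m-1}\cdot a_1)(\tau^{m-2}\cdot a_2)\cdots(\tau^2\cdot a_{m-2})(\tau\cdot a_{m-1})$. The $m$th twisted Frobenius–Schur indicator of $A$ is $\nu_{m,\tau}(A)=\mathrm{Tr}(S\circ P_{m-1,\tau})$, the trace of the linear map $S\circ P_{m-1,\tau}:A\to A$, $S$ the antipode. For $h\in A$, $h^{[m,\tau]}=\sum h_1(\tau\cdot h_2)(\tau^2\cdot h_3)\cdots(\tau^{m-1}\cdot h_m)$. *)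

(* Defs.v *)
From HB Require Import structures.
From mathcomp Require Import all_boot all_order all_algebra all_field.
Set Implicit Arguments. Unset Strict Implicit. Unset Printing Implicit Defensive.
Import GRing.Theory.
Local Open Scope ring_scope.

(* A finite-dimensional Hopf algebra over the field k is encoded as a
   finite-dimensional unital k-algebra A (falgType k) together with
   - the structure constants cD of the coproduct in the fixed basis
     b = vbasis {:A}:  Delta(b_l) = sum_(i,j) cD l i j  b_i (x) b_j,
   - the counit eps : A -> k (linear),
   - the antipode S : 'End(A) (linear),
   subject to the Hopf algebra axioms (stated below in coordinates). *)

Section Hopf.
Variables (k : fieldType) (A : falgType k).

Definition hb : (\dim {:A}).-tuple A := vbasis {:A}.
Notation d := (\dim {:A}).
Notation bb i := (hb`_i).

Record hopf_data := HopfData {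
  cD : 'I_d -> 'I_d -> 'I_d -> k;
  eps : 'Hom(A, k^o);
  antipode : 'End(A)
}.

Variable H : hopf_data.

(* coefficient of b_i (x) b_j in Delta(a) *)
Definition Dc (a : A) (i j : 'I_d) : k :=
  \sum_(l < d) coord hb l a * cD H l i j.

Definition coassoc : Prop :=
  forall l p q r : 'I_d,
    \sum_(i < d) cD H l i r * cD H i p q = \sum_(j < d) cD H l p j * cD H j q r.

Definition counit_ax : Prop :=
  (forall a : A, \sum_(i < d) \sum_(j < d) (Dc a i j * eps H (bb i)) *: bb j = a) /\
  (forall a : A, \sum_(i < d) \sum_(j < d) (Dc a i j * eps H (bb j)) *: bb i = a).

(* Delta(a a') = Delta(a) Delta(a') and Delta(1) = 1 (x) 1 *)
Definition coprod_alg_map : Prop :=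
  (forall (a a' : A) (p q : 'I_d),
     Dc (a * a') p q
     = \sum_(i < d) \sum_(j < d) \sum_(i' < d) \sum_(j' < d)
         Dc a i j * Dc a' i' j' * coord hb p (bb i * bb i')
                                * coord hb q (bb j * bb j')) /\
  (forall p q : 'I_d, Dc 1 p q = coord hb p 1 * coord hb q 1).

Definition counit_alg_map : Prop :=
  (forall a a' : A, eps H (a * a') = eps H a * eps H a') /\ eps H 1 = 1.

Definition antipode_ax : Prop :=
  (forall a : A,
     \sum_(i < d) \sum_(j < d) Dc a i j *: (antipode H (bb i) * bb j) = eps H a *: 1)
  /\
  (forall a : A,
     \sum_(i < d) \sum_(j < d) Dc a i j *: (bb i * antipode H (bb j)) = eps H a *: 1).

Definition is_hopf : Prop :=
  [/\ coassoc, counit_ax, coprod_alg_map, counit_alg_map & antipode_ax].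

(* For n tensor factors, [sweedler n a F] is
   sum F [:: a_1; ...; a_n]  where  Delta^(n-1)(a) = sum a_1 (x) ... (x) a_n,
   with F extended multilinearly from basis tuples (Delta^(-1) := eps,
   Delta^0 := id, Delta^(n) := (Delta^(n-1) (x) id) o Delta). *)
Fixpoint sweedler (n : nat) (a : A) (F : seq A -> A) : A :=
  match n with
  | 0 => eps H a *: F [::]
  | n'.+1 => \sum_(i < d) \sum_(j < d)
               Dc a i j *: sweedler n' (bb i) (fun s => F (rcons s (bb j)))
  end.

Definition hopf_aut (tau : 'End(A)) : Prop :=
  [/\ bijective tau,
      (forall a a' : A, tau (a * a') = tau a * tau a'),
      tau 1 = 1,
      (forall (a : A) (p q : 'I_d),
         Dc (tau a) p q = \sum_(i < d) \sum_(j < d)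
             Dc a i j * coord hb p (tau (bb i)) * coord hb q (tau (bb j))) &
      (forall a : A, eps H (tau a) = eps H a)].

Definition taupow (tau : 'End(A)) (n : nat) (x : A) : A := iter n tau x.

(* P_{m-1,tau}(a) = sum (tau^{m-1} a_1)(tau^{m-2} a_2) ... (tau a_{m-1}),
   Delta^{m-2}(a) = sum a_1 (x) ... (x) a_{m-1}. *)
Definition Ptau (m : nat) (tau : 'End(A)) (a : A) : A :=
  sweedler m.-1 a
    (fun s => \prod_(l < m.-1) taupow tau (m.-1 - l) (nth 0 s l)).

Definition trace (f : A -> A) : k := \sum_(i < d) coord hb i (f (bb i)).

Definition twisted_FS_indicator (m : nat) (tau : 'End(A)) : k :=
  trace (fun a => antipode H (Ptau m tau a)).

Definition twisted_power (m : nat) (tau : 'End(A)) (h : A) : A :=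
  sweedler m h (fun s => \prod_(l < m) taupow tau l (nth 0 s l)).

Definition left_integral (L : A) : Prop := forall a : A, a * L = eps H a *: L.

(* right integral of A^*: lam * f = f(1) lam in the convolution algebra A^*,
   i.e. sum lam(a_1) f(a_2) = f(1) lam(a) for all f in A^*, a in A. *)
Definition right_integral_dual (lam : 'Hom(A, k^o)) : Prop :=
  forall (f : 'Hom(A, k^o)) (a : A),
    \sum_(i < d) \sum_(j < d) Dc a i j * lam (bb i) * f (bb j) = f 1 * lam a.

End Hopf.

(* Main.v *)
Require Import Defs.
From HB Require Import structures.
From mathcomp Require Import all_boot all_order all_algebra all_field.
Set Implicit Arguments. Unset Strict Implicit. Unset Printing Implicit Defensive.
Import GRing.Theory.
Local Open Scope ring_scope.

Section HopfProof.
Variables (k : fieldType) (A : falgType k) (H : hopf_data A).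
Local Notation d := (\dim {:A}).
Local Notation I := 'I_(\dim {:A}).
Local Notation hb := (hb A).
Local Notation bb i := (hb`_i).
Local Notation S := (antipode H).
Local Notation ep := (eps H).
Local Notation Dc := (Dc H).
Local Notation cd := (cD H).
Local Notation co i x := (coord hb i x).

Lemma expand (x : A) : x = \sum_(i < d) co i x *: bb i.
Proof. exact: coord_vbasis (memvf x). Qed.

Lemma hb_free : free hb. Proof. exact: basis_free (vbasisP _). Qed.

Lemma co_bb (i j : I) : co j (bb i) = (i == j)%:R.
Proof. exact: coord_free hb_free. Qed.

Lemma co_sum (c : I -> k) j : co j (\sum_i c i *: bb i) = c j.
Proof. exact: coord_sum_free hb_free. Qed.

Lemma eq_co (x y : A) : (forall j, co j x = co j y) -> x = y.
Proof. by move=> e; rewrite (expand x) (expand y); apply: eq_bigr => i _; rewrite e. Qed.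

Lemma lin_expand (V : lmodType k) (f : {linear A -> V}) x :
  f x = \sum_(i < d) co i x *: f (bb i).
Proof. by rewrite {1}(expand x) linear_sum; apply: eq_bigr => i _; rewrite linearZ. Qed.

Lemma DcE a i j : Dc a i j = \sum_(l < d) co l a * cd l i j.
Proof. by []. Qed.

Lemma Dc_bb (l i j : I) : Dc (bb l) i j = cd l i j.
Proof.
rewrite DcE (bigD1 l) //= co_bb eqxx mul1r big1 ?addr0 // => l' /negPf nl.
by rewrite co_bb eq_sym nl mul0r.
Qed.

Lemma DcD a a' i j : Dc (a + a') i j = Dc a i j + Dc a' i j.
Proof. by rewrite !DcE -big_split; apply: eq_bigr => l _; rewrite linearD mulrDl. Qed.

Lemma DcZ c a i j : Dc (c *: a) i j = c * Dc a i j.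
Proof. by rewrite !DcE mulr_sumr; apply: eq_bigr => l _; rewrite linearZ mulrA. Qed.

Lemma Dc_sum (J : finType) (c : J -> k) (f : J -> A) i j :
  Dc (\sum_t c t *: f t) i j = \sum_t c t * Dc (f t) i j.
Proof.
rewrite DcE (eq_bigr (fun l => \sum_t c t * (co l (f t) * cd l i j))).
  by rewrite exchange_big; apply: eq_bigr => t _; rewrite -mulr_sumr.
by move=> l _; rewrite linear_sum mulr_suml; apply: eq_bigr => t _; rewrite linearZ mulrA.
Qed.

Lemma Dc0 i j : Dc 0 i j = 0.
Proof. by rewrite DcE big1 // => l _; rewrite linear0 mul0r. Qed.


Definition D2 {V : lmodType k} (a : A) (F : I -> I -> V) : V := \sum_i \sum_j Dc a i j *: F i j.

Lemma D2_ext (V : lmodType k) a (F G : I -> I -> V) : (forall i j, F i j = G i j) -> D2 a F = D2 a G.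
Proof. by move=> e; apply: eq_bigr => i _; apply: eq_bigr => j _; rewrite e. Qed.

Lemma D2_lin (V : lmodType k) (W : lmodType k) (h : {linear V -> W}) a (F : I -> I -> V) :
  h (D2 a F) = D2 a (fun i j => h (F i j)).
Proof.
rewrite /D2 linear_sum; apply: eq_bigr => i _; rewrite linear_sum.
by apply: eq_bigr => j _; rewrite linearZ.
Qed.

Lemma D2_add (V : lmodType k) a (F G : I -> I -> V) : D2 a (fun i j => F i j + G i j) = D2 a F + D2 a G.
Proof.
rewrite /D2 -big_split; apply: eq_bigr => i _; rewrite -big_split.
by apply: eq_bigr => j _; rewrite scalerDr.
Qed.

Lemma D2_scale (V : lmodType k) a c (F : I -> I -> V) : D2 a (fun i j => c *: F i j) = c *: D2 a F.
Proof.
rewrite /D2 scaler_sumr; apply: eq_bigr => i _; rewrite scaler_sumr.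
by apply: eq_bigr => j _; rewrite !scalerA mulrC.
Qed.

Lemma D2_sumF (V : lmodType k) (J : finType) a (F : J -> I -> I -> V) :
  D2 a (fun i j => \sum_t F t i j) = \sum_t D2 a (F t).
Proof.
rewrite /D2; under eq_bigr do under eq_bigr do rewrite scaler_sumr.
by under eq_bigr do rewrite exchange_big; rewrite exchange_big.
Qed.

Lemma D2_expand (V : lmodType k) a (F : I -> I -> V) : D2 a F = \sum_l co l a *: D2 (bb l) F.
Proof.
rewrite /D2.
under eq_bigr do under eq_bigr do rewrite DcE scaler_suml.
rewrite (eq_bigr (fun i => \sum_l \sum_j co l a *: (cd l i j *: F i j))); last first.
  by move=> i _; rewrite exchange_big; apply: eq_bigr => l _; apply: eq_bigr => j _; rewrite scalerA.
rewrite exchange_big; apply: eq_bigr => l _; rewrite scaler_sumr; apply: eq_bigr => i _.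
by rewrite scaler_sumr; apply: eq_bigr => j _; rewrite Dc_bb.
Qed.

Lemma D2_in_add (V : lmodType k) a a' (F : I -> I -> V) : D2 (a + a') F = D2 a F + D2 a' F.
Proof.
rewrite /D2 -big_split; apply: eq_bigr => i _; rewrite -big_split.
by apply: eq_bigr => j _; rewrite DcD scalerDl.
Qed.

Lemma D2_in_scale (V : lmodType k) c a (F : I -> I -> V) : D2 (c *: a) F = c *: D2 a F.
Proof.
rewrite /D2 scaler_sumr; apply: eq_bigr => i _; rewrite scaler_sumr.
by apply: eq_bigr => j _; rewrite DcZ scalerA.
Qed.

Lemma D2_in_sum (V : lmodType k) (J : finType) (c : J -> k) (f : J -> A) (F : I -> I -> V) :
  D2 (\sum_t c t *: f t) F = \sum_t c t *: D2 (f t) F.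
Proof.
rewrite /D2; under eq_bigr do under eq_bigr do rewrite Dc_sum scaler_suml.
rewrite (eq_bigr (fun i => \sum_t \sum_j c t *: (Dc (f t) i j *: F i j))); last first.
  by move=> i _; rewrite exchange_big; apply: eq_bigr => t _; apply: eq_bigr => j _; rewrite scalerA.
rewrite exchange_big; apply: eq_bigr => t _; rewrite scaler_sumr.
by apply: eq_bigr => i _; rewrite scaler_sumr.
Qed.


Lemma D2D2 (V : lmodType k) x y (F : I -> I -> I -> I -> V) :
  D2 x (fun i j => D2 y (fun i' j' => F i j i' j')) =
  \sum_i \sum_j \sum_i' \sum_j' (Dc x i j * Dc y i' j') *: F i j i' j'.
Proof.
rewrite /D2; apply: eq_bigr => i _; apply: eq_bigr => j _.
rewrite scaler_sumr; apply: eq_bigr => i' _; rewrite scaler_sumr.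
by apply: eq_bigr => j' _; rewrite scalerA.
Qed.

Lemma D2_swap (V : lmodType k) x y (F : I -> I -> I -> I -> V) :
  D2 x (fun i j => D2 y (fun i' j' => F i j i' j')) =
  D2 y (fun i' j' => D2 x (fun i j => F i j i' j')).
Proof.
rewrite !D2D2.
under eq_bigr do rewrite exchange_big.
rewrite exchange_big; apply: eq_bigr => i' _.
under eq_bigr do rewrite exchange_big.
rewrite exchange_big; apply: eq_bigr => j' _.
apply: eq_bigr => i _; apply: eq_bigr => j _.
by rewrite mulrC.
Qed.


Definition islin (V W : lmodType k) (G : V -> W) :=
  forall c u v, G (c *: u + v) = c *: G u + G v.

Lemma islin0 (V W : lmodType k) (G : V -> W) : islin G -> G 0 = 0.
Proof. move=> h; have e := h 1 0 0; rewrite !scale1r addr0 in e. by apply: (addrI (G 0)); rewrite addr0 -e. Qed.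

Lemma islinD (V W : lmodType k) (G : V -> W) : islin G -> forall u v, G (u + v) = G u + G v.
Proof. by move=> h u v; have := h 1 u v; rewrite !scale1r. Qed.

Lemma islinZ (V W : lmodType k) (G : V -> W) : islin G -> forall c u, G (c *: u) = c *: G u.
Proof. by move=> h c u; rewrite -[c *: u]addr0 h (islin0 h) addr0. Qed.

Lemma islin_sum (V W : lmodType k) (G : V -> W) (J : finType) (f : J -> V) :
  islin G -> G (\sum_t f t) = \sum_t G (f t).
Proof. by move=> h; apply: (big_morph G (islinD h) (islin0 h)). Qed.

Lemma islin_lin (V W : lmodType k) (G : {linear V -> W}) : islin G.
Proof. by move=> c u v; rewrite linearD linearZ. Qed.

Lemma islin_expand (V : lmodType k) (G : A -> V) x : islin G ->
  G x = \sum_(i < d) co i x *: G (bb i).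
Proof.
move=> h; rewrite {1}(expand x) islin_sum //; apply: eq_bigr => i _.
by rewrite islinZ.
Qed.

Hypothesis hH : is_hopf H.

Lemma coassocDc a p q r :
  \sum_i Dc a i r * cd i p q = \sum_j Dc a p j * cd j q r.
Proof.
case: hH => ca _ _ _ _.
rewrite (eq_bigr (fun i => \sum_l co l a * (cd l i r * cd i p q))); last first.
  by move=> i _; rewrite DcE mulr_suml; apply: eq_bigr => l _; rewrite mulrA.
rewrite exchange_big.
rewrite [RHS](eq_bigr (fun j => \sum_l co l a * (cd l p j * cd j q r))); last first.
  by move=> j _; rewrite DcE mulr_suml; apply: eq_bigr => l _; rewrite mulrA.
rewrite [RHS]exchange_big; apply: eq_bigr => l _.
by rewrite -!mulr_sumr ca.
Qed.

Lemma D2_bb (V : lmodType k) (l : I) (F : I -> I -> V) :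
  D2 (bb l) F = \sum_u \sum_v cd l u v *: F u v.
Proof. by apply: eq_bigr => u _; apply: eq_bigr => v _; rewrite Dc_bb. Qed.

Lemma D2_coassoc (V : lmodType k) a (F : I -> I -> I -> V) :
  D2 a (fun i j => D2 (bb i) (fun u v => F u v j)) =
  D2 a (fun i j => D2 (bb j) (fun u v => F i u v)).
Proof.
rewrite (D2_ext _ (fun i j => D2_bb i (fun u v => F u v j))).
rewrite [RHS](D2_ext _ (fun i j => D2_bb j (fun u v => F i u v))) /D2.
transitivity (\sum_u \sum_v \sum_j (\sum_i Dc a i j * cd i u v) *: F u v j).
  under eq_bigr do under eq_bigr do rewrite scaler_sumr.
  under eq_bigr do rewrite exchange_big.
  rewrite exchange_big; apply: eq_bigr => u _.
  under eq_bigr do under eq_bigr do rewrite scaler_sumr.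
  under eq_bigr do rewrite exchange_big.
  rewrite exchange_big; apply: eq_bigr => v _.
  rewrite exchange_big; apply: eq_bigr => j _.
  by rewrite scaler_suml; apply: eq_bigr => i _; rewrite scalerA.
under eq_bigr do under eq_bigr do under eq_bigr do rewrite coassocDc scaler_suml.
apply: eq_bigr => u _.
under eq_bigr do rewrite exchange_big.
rewrite exchange_big; apply: eq_bigr => j' _.
rewrite scaler_sumr; apply: eq_bigr => v _.
rewrite scaler_sumr; apply: eq_bigr => j _.
by rewrite scalerA.
Qed.

Lemma counitL a j : \sum_i Dc a i j * ep (bb i) = co j a.
Proof.
case: hH => _ [cL _] _ _ _.
have := congr1 (coord hb j) (cL a).
rewrite exchange_big /=.
rewrite (eq_bigr (fun j' => (\sum_i Dc a i j' * ep (bb i)) *: bb j')); last first.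
  by move=> j' _; rewrite scaler_suml.
by rewrite co_sum.
Qed.

Lemma counitR a i : \sum_j Dc a i j * ep (bb j) = co i a.
Proof.
case: hH => _ [_ cR] _ _ _.
have := congr1 (coord hb i) (cR a).
rewrite (eq_bigr (fun i' => (\sum_j Dc a i' j * ep (bb j)) *: bb i')); last first.
  by move=> i' _; rewrite scaler_suml.
by rewrite co_sum.
Qed.

Lemma D2_epL (V : lmodType k) a (F : I -> V) :
  D2 a (fun i j => ep (bb i) *: F j) = \sum_j co j a *: F j.
Proof.
rewrite /D2 exchange_big; apply: eq_bigr => j _.
rewrite -counitL scaler_suml; apply: eq_bigr => i _.
by rewrite scalerA.
Qed.

Lemma D2_epR (V : lmodType k) a (F : I -> V) :
  D2 a (fun i j => ep (bb j) *: F i) = \sum_i co i a *: F i.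
Proof.
rewrite /D2; apply: eq_bigr => i _.
rewrite -counitR scaler_suml; apply: eq_bigr => j _.
by rewrite scalerA.
Qed.

Lemma D2_SL (V : lmodType k) a (G : A -> V) : islin G ->
  D2 a (fun i j => G (S (bb i) * bb j)) = ep a *: G 1.
Proof.
case: hH => _ _ _ _ [aL _] hG.
rewrite -islinZ // -(aL a) islin_sum //; apply: eq_bigr => i _.
by rewrite islin_sum //; apply: eq_bigr => j _; rewrite islinZ.
Qed.

Lemma D2_SR (V : lmodType k) a (G : A -> V) : islin G ->
  D2 a (fun i j => G (bb i * S (bb j))) = ep a *: G 1.
Proof.
case: hH => _ _ _ _ [_ aR] hG.
rewrite -islinZ // -(aR a) islin_sum //; apply: eq_bigr => i _.
by rewrite islin_sum //; apply: eq_bigr => j _; rewrite islinZ.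
Qed.

Lemma Dc1 p q : Dc 1 p q = co p 1 * co q 1.
Proof. by case: hH => _ _ [_ h] _ _. Qed.

Lemma epM x y : ep (x * y) = ep x * ep y.
Proof. by case: hH => _ _ _ [h _] _. Qed.

Lemma ep1 : ep 1 = 1.
Proof. by case: hH => _ _ _ [_ h] _. Qed.

Lemma big_pull2 (V : lmodType k) (G : I -> I -> I -> V) :
  \sum_a \sum_p \sum_q G a p q = \sum_p \sum_q \sum_a G a p q.
Proof. by rewrite exchange_big; apply: eq_bigr => p _; rewrite exchange_big. Qed.

Definition bilin (V : lmodType k) (B : A -> A -> V) :=
  forall u v, B u v = \sum_p \sum_q (co p u * co q v) *: B (bb p) (bb q).

Lemma D2_mul (V : lmodType k) x y (B : A -> A -> V) : bilin B ->
  D2 (x * y) (fun p q => B (bb p) (bb q)) =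
  D2 x (fun i j => D2 y (fun i' j' => B (bb i * bb i') (bb j * bb j'))).
Proof.
case: hH => _ _ [hm _] _ _ hB.
rewrite D2D2.
under [RHS]eq_bigr do under eq_bigr do under eq_bigr do under eq_bigr do
  rewrite hB scaler_sumr.
under [RHS]eq_bigr do under eq_bigr do under eq_bigr do under eq_bigr do
  under eq_bigr do rewrite scaler_sumr.
under [RHS]eq_bigr do under eq_bigr do under eq_bigr do rewrite big_pull2.
under [RHS]eq_bigr do under eq_bigr do rewrite big_pull2.
under [RHS]eq_bigr do rewrite big_pull2.
rewrite [RHS]big_pull2 /D2; apply: eq_bigr => p _; apply: eq_bigr => q _.
rewrite hm !scaler_suml; apply: eq_bigr => i _; rewrite scaler_suml; apply: eq_bigr => j _.
rewrite scaler_suml; apply: eq_bigr => i' _; rewrite scaler_suml; apply: eq_bigr => j' _.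
by rewrite scalerA !mulrA.
Qed.


Ltac solve_lin := let c := fresh in let u := fresh in let v := fresh in
  move=> c u v; rewrite /=;
  repeat (first [rewrite linearD | rewrite linearZ | rewrite mulrDl | rewrite mulrDr
                | rewrite -scalerAl | rewrite -scalerAr]); rewrite /= ?mulrA; done.

Lemma bilin_of (V : lmodType k) (B : A -> A -> V) :
  (forall v, islin (fun u => B u v)) -> (forall u, islin (B u)) -> bilin B.
Proof.
move=> h1 h2 u v.
have -> : B u v = \sum_p co p u *: B (bb p) v by exact: (islin_expand u (h1 v)).
apply: eq_bigr => p _.
have -> : B (bb p) v = \sum_q co q v *: B (bb p) (bb q) by exact: (islin_expand v (h2 (bb p))).
rewrite scaler_sumr; apply: eq_bigr => q _.
by rewrite scalerA mulrC.
Qed.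

Lemma D2_scaleF (V : lmodType k) a (c : I -> I -> k) (F : I -> I -> V) :
  D2 a (fun i j => c i j *: F i j) = D2 a (fun i j => c i j *: F i j).
Proof. by []. Qed.

Lemma S_mul x y : S (x * y) = S y * S x.
Proof.
pose E := D2 x (fun i j => D2 (bb i) (fun u v => D2 y (fun i' j' =>
   D2 (bb i') (fun u' v' => S (bb u') * S (bb u) * (bb v * bb v') * S (bb j * bb j'))))).
have e2 : E = S (x * y).
  rewrite /E.
  rewrite (D2_ext _ (fun i j => D2_swap (bb i) y (fun u v i' j' =>
      D2 (bb i') (fun u' v' => S (bb u') * S (bb u) * (bb v * bb v') * S (bb j * bb j'))))).
  have e : forall i j i' j' : I, D2 (bb i) (fun u v =>
      D2 (bb i') (fun u' v' => S (bb u') * S (bb u) * (bb v * bb v') * S (bb j * bb j')))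
      = (ep (bb i) * ep (bb i')) *: S (bb j * bb j').
    move=> i j i' j'.
    rewrite D2_swap.
    have e : forall u' v' : I, D2 (bb i) (fun u v => S (bb u') * S (bb u) * (bb v * bb v') * S (bb j * bb j'))
         = ep (bb i) *: (S (bb u') * bb v' * S (bb j * bb j')).
      move=> u' v'.
      have h := D2_SL (bb i) (G := fun w => S (bb u') * w * bb v' * S (bb j * bb j')) ltac:(solve_lin).
      rewrite /= mulr1 in h; rewrite -h.
      by apply: D2_ext => u v; rewrite !mulrA.
    rewrite (D2_ext _ e) D2_scale -scalerA; congr (_ *: _).
    have h := D2_SL (bb i') (G := fun w => w * S (bb j * bb j')) ltac:(solve_lin).
    by rewrite /= mul1r in h; rewrite -h.
  rewrite (D2_ext _ (fun i j => D2_ext _ (fun i' j' => e i j i' j'))).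
  rewrite (D2_ext _ (fun i j => D2_ext _ (fun i' j' => esym (scalerA (ep (bb i)) (ep (bb i')) (S (bb j * bb j')))))).
  rewrite (D2_ext _ (fun i j => D2_scale y (ep (bb i)) (fun i' j' => ep (bb i') *: S (bb j * bb j')))).
  rewrite D2_epL.
  rewrite (eq_bigr (fun j => co j x *: S (bb j * y))).
    by symmetry; apply: (islin_expand x (G := fun w => S (w * y))); solve_lin.
  move=> j _; rewrite D2_epL; congr (_ *: _).
  by symmetry; apply: (islin_expand y (G := fun w => S (bb j * w))); solve_lin.
have e1 : E = S y * S x.
  rewrite /E D2_coassoc.
  rewrite (D2_ext _ (fun u w => D2_ext _ (fun v j => D2_coassoc y
     (fun u' v' j' => S (bb u') * S (bb u) * (bb v * bb v') * S (bb j * bb j'))))).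
  rewrite (D2_ext _ (fun u w => D2_swap (bb w) y (fun v j u' w' =>
      D2 (bb w') (fun v' j' => S (bb u') * S (bb u) * (bb v * bb v') * S (bb j * bb j'))))).
  have e : forall u w u' w' : I, D2 (bb w) (fun v j => D2 (bb w') (fun v' j' =>
      S (bb u') * S (bb u) * (bb v * bb v') * S (bb j * bb j'))) =
      (ep (bb w) * ep (bb w')) *: (S (bb u') * S (bb u)).
    move=> u w u' w'.
    rewrite -(D2_mul (bb w) (bb w') (B := fun p q => S (bb u') * S (bb u) * p * S q)); last first.
      by apply: bilin_of => ?; solve_lin.
    have h := D2_SR (bb w * bb w') (G := fun t => S (bb u') * S (bb u) * t) ltac:(solve_lin).
    rewrite /= mulr1 in h; rewrite -epM -h.
    by apply: D2_ext => p q; rewrite !mulrA.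
  rewrite (D2_ext _ (fun u w => D2_ext _ (fun u' w' => e u w u' w'))).
  rewrite D2_swap.
  have e' : forall u' w' : I, D2 x (fun u w => (ep (bb w) * ep (bb w')) *: (S (bb u') * S (bb u)))
      = ep (bb w') *: (S (bb u') * S x).
    move=> u' w'.
    transitivity (D2 x (fun u w => ep (bb w') *: (ep (bb w) *: (S (bb u') * S (bb u))))).
      by apply: D2_ext => u w; rewrite scalerA mulrC.
    rewrite D2_scale D2_epR; congr (_ *: _).
    by symmetry; apply: (islin_expand x (G := fun t => S (bb u') * S t)); solve_lin.
  rewrite (D2_ext _ e') D2_epR.
  by symmetry; apply: (islin_expand y (G := fun t => S t * S x)); solve_lin.
by rewrite -e1 e2.
Qed.


Lemma D2_one (V : lmodType k) (B : A -> A -> V) : bilin B ->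
  D2 1 (fun p q => B (bb p) (bb q)) = B 1 1.
Proof.
move=> hB; rewrite hB /D2; apply: eq_bigr => p _; apply: eq_bigr => q _.
by rewrite Dc1.
Qed.

Lemma S1 : S 1 = 1.
Proof.
have h := D2_SL 1 (G := id) ltac:(solve_lin).
rewrite ep1 scale1r /= in h.
rewrite -[RHS]h -[LHS]mulr1.
by rewrite (D2_one (B := fun u v => S u * v)) //; apply: bilin_of => ?; solve_lin.
Qed.

Lemma D2_fun (V : lmodType k) a (F : A -> V) : islin F ->
  D2 a (fun i j => ep (bb j) *: F (bb i)) = F a.
Proof. by move=> hF; rewrite D2_epR -islin_expand. Qed.

Lemma D2_funL (V : lmodType k) a (F : A -> V) : islin F ->
  D2 a (fun i j => ep (bb i) *: F (bb j)) = F a.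
Proof. by move=> hF; rewrite D2_epL -islin_expand. Qed.

Lemma ep_S a : ep (S a) = ep a.
Proof.
have h := D2_SL a (G := ep) (islin_lin _).
rewrite ep1 -[ep a *: 1]/(ep a * 1) mulr1 in h.
rewrite -h -(D2_fun a (F := fun x => ep (S x))); last by solve_lin.
apply: D2_ext => i j; rewrite epM; exact: mulrC.
Qed.


Lemma D2_tau (V : lmodType k) (tau : 'End(A)) z (B : A -> A -> V) :
  hopf_aut H tau -> bilin B ->
  D2 (tau z) (fun p q => B (bb p) (bb q)) = D2 z (fun i j => B (tau (bb i)) (tau (bb j))).
Proof.
case=> _ _ _ htc _ hB.
rewrite /D2.
under eq_bigr do under eq_bigr do rewrite htc scaler_suml.
under eq_bigr do rewrite exchange_big.
rewrite exchange_big; apply: eq_bigr => i _.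
under eq_bigr do under eq_bigr do rewrite scaler_suml.
under eq_bigr do rewrite exchange_big.
rewrite exchange_big; apply: eq_bigr => j _.
rewrite hB scaler_sumr; apply: eq_bigr => p _; rewrite scaler_sumr; apply: eq_bigr => q _.
by rewrite scalerA !mulrA.
Qed.

Lemma tau_S (tau : 'End(A)) a : hopf_aut H tau -> tau (S a) = S (tau a).
Proof.
move=> ht; have ht' := ht; case: ht' => _ tM t1 _ tep.
pose E := D2 a (fun i j => D2 (bb i) (fun u v => tau (S (bb u)) * tau (bb v) * S (tau (bb j)))).
have e2 : E = S (tau a).
  have e : forall i j : I, D2 (bb i) (fun u v => tau (S (bb u)) * tau (bb v) * S (tau (bb j)))
     = ep (bb i) *: S (tau (bb j)).
    move=> i j.
    have h := D2_SL (bb i) (G := fun w => tau w * S (tau (bb j))) ltac:(solve_lin).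
    rewrite /= t1 mul1r in h; rewrite -h.
    by apply: D2_ext => u v; rewrite tM.
  rewrite /E (D2_ext _ e) (D2_funL a (F := fun x => S (tau x))) //; solve_lin.
have e1 : E = tau (S a).
  rewrite /E D2_coassoc.
  have e : forall u w : I, D2 (bb w) (fun v j => tau (S (bb u)) * tau (bb v) * S (tau (bb j)))
     = ep (bb w) *: tau (S (bb u)).
    move=> u w.
    have h := D2_SR (tau (bb w)) (G := fun t => tau (S (bb u)) * t) ltac:(solve_lin).
    rewrite /= mulr1 tep in h; rewrite -h.
    rewrite [RHS](D2_tau (B := fun p q => tau (S (bb u)) * (p * S q)) _ ht); last by apply: bilin_of => ?; solve_lin.
    by apply: D2_ext => v j; rewrite mulrA.
  rewrite (D2_ext _ e) (D2_fun a (F := fun x => tau (S x))) //; solve_lin.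
by rewrite -e1 e2.
Qed.


Lemma islin_D2a (V : lmodType k) (F : I -> I -> V) : islin (fun x => D2 x F).
Proof. by move=> c u v; rewrite D2_in_add D2_in_scale. Qed.

Lemma islin_D2F (V : lmodType k) a (F : A -> I -> I -> V) :
  (forall i j, islin (fun x => F x i j)) -> islin (fun x => D2 a (F x)).
Proof.
move=> h c u v; rewrite -D2_scale -D2_add; apply: D2_ext => i j; exact: h.
Qed.

Lemma bilinL (V : lmodType k) (B : A -> A -> V) : bilin B -> forall w, islin (fun u => B u w).
Proof.
move=> hB w c u v; rewrite [B (c *: u + v) w]hB [B u w]hB [B v w]hB.
rewrite scaler_sumr -big_split; apply: eq_bigr => p _.
rewrite scaler_sumr -big_split; apply: eq_bigr => q _.
by rewrite linearD linearZ /= scalerA -scalerDl mulrDl mulrA.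
Qed.

Lemma bilinR (V : lmodType k) (B : A -> A -> V) : bilin B -> forall u, islin (B u).
Proof.
move=> hB u c v w; rewrite [B u (c *: v + w)]hB [B u v]hB [B u w]hB.
rewrite scaler_sumr -big_split; apply: eq_bigr => p _.
rewrite scaler_sumr -big_split; apply: eq_bigr => q _.
rewrite linearD linearZ /= scalerA -scalerDl; congr (_ *: _).
by rewrite mulrDr; congr (_ + _); exact: mulrCA.
Qed.

Lemma bilin_mulL (V : lmodType k) (B : A -> A -> V) X Y : bilin B ->
  bilin (fun g h => B (X * g) (Y * h)).
Proof.
move=> hB; apply: bilin_of => [w | u] c p q /=.
  by rewrite mulrDr -scalerAr (bilinL hB).
by rewrite mulrDr -scalerAr (bilinR hB).
Qed.

Lemma D2_S (V : lmodType k) a (B : A -> A -> V) : bilin B ->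
  D2 (S a) (fun p q => B (bb p) (bb q)) = D2 a (fun i j => B (S (bb j)) (S (bb i))).
Proof.
move=> hB.
pose W u v e f q := D2 (S (bb q)) (fun r s =>
   B (S (bb v) * bb e * bb r) (S (bb u) * bb f * bb s)).
pose E := D2 a (fun i j => D2 (bb i) (fun u v => D2 (bb j) (fun p q =>
   D2 (bb p) (fun e f => W u v e f q)))).
have eB : E = D2 a (fun i j => B (S (bb j)) (S (bb i))).
  have e : forall j u v : I, D2 (bb j) (fun p q => D2 (bb p) (fun e f => W u v e f q))
      = ep (bb j) *: B (S (bb v)) (S (bb u)).
    move=> j u v.
    have e : forall p q : I, D2 (bb p) (fun e f => W u v e f q) =
       D2 (bb p * S (bb q)) (fun g h => B (S (bb v) * bb g) (S (bb u) * bb h)).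
      move=> p q; rewrite (D2_mul _ _ (B := fun g h => B (S (bb v) * g) (S (bb u) * h))); last first.
        exact: bilin_mulL.
      by apply: D2_ext => e f; rewrite /W; apply: D2_ext => r s; rewrite !mulrA.
    rewrite (D2_ext _ e).
    have h := D2_SR (bb j) (G := fun z => D2 z (fun g h => B (S (bb v) * bb g) (S (bb u) * bb h)))
       (islin_D2a _).
    rewrite /= in h; rewrite h.
    rewrite (D2_one (B := fun g h => B (S (bb v) * g) (S (bb u) * h))); last exact: bilin_mulL.
    by rewrite !mulr1.
  rewrite /E (D2_ext _ (fun i j => D2_ext _ (fun u v => e j u v))).
  rewrite (D2_ext _ (fun i j => D2_scale (bb i) (ep (bb j)) (fun u v => B (S (bb v)) (S (bb u))))).
  rewrite (D2_fun a (F := fun x => D2 x (fun u v => B (S (bb v)) (S (bb u))))) //.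
  exact: islin_D2a.
have eA : E = D2 (S a) (fun p q => B (bb p) (bb q)).
  rewrite /E.
  rewrite (D2_ext _ (fun i j => D2_ext _ (fun u v => D2_coassoc (bb j) (fun e f q => W u v e f q)))).
  rewrite (D2_coassoc a (fun u v j => D2 (bb j) (fun e w => D2 (bb w) (fun f q => W u v e f q)))).
  have e : forall u z : I, D2 (bb z) (fun v j => D2 (bb j) (fun e w => D2 (bb w) (fun f q => W u v e f q)))
     = D2 (bb z) (fun f q => D2 (S (bb q)) (fun r s => B (bb r) (S (bb u) * bb f * bb s))).
    move=> u z.
    rewrite -(D2_coassoc (bb z) (fun v e w => D2 (bb w) (fun f q => W u v e f q))).
    have e : forall t w : I, D2 (bb t) (fun v e => D2 (bb w) (fun f q => W u v e f q)) =
       ep (bb t) *: D2 (bb w) (fun f q => D2 (S (bb q)) (fun r s => B (bb r) (S (bb u) * bb f * bb s))).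
      move=> t w.
      have h := D2_SL (bb t) (G := fun x => D2 (bb w) (fun f q => D2 (S (bb q)) (fun r s =>
           B (x * bb r) (S (bb u) * bb f * bb s)))).
      rewrite /= in h; rewrite h; last first.
        apply: islin_D2F => f q; apply: islin_D2F => r s c x y.
        by rewrite mulrDl -scalerAl (bilinL hB).
      by congr (_ *: _); apply: D2_ext => f q; apply: D2_ext => r s; rewrite mul1r.
    rewrite (D2_ext _ e).
    by rewrite (D2_funL (bb z) (F := fun x => D2 x (fun f q => D2 (S (bb q)) (fun r s =>
        B (bb r) (S (bb u) * bb f * bb s))))) //; exact: islin_D2a.
  rewrite (D2_ext _ e).
  rewrite -(D2_coassoc a (fun u f q => D2 (S (bb q)) (fun r s => B (bb r) (S (bb u) * bb f * bb s)))).
  have e' : forall y q : I, D2 (bb y) (fun u f => D2 (S (bb q)) (fun r s => B (bb r) (S (bb u) * bb f * bb s)))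
     = ep (bb y) *: D2 (S (bb q)) (fun r s => B (bb r) (bb s)).
    move=> y q.
    have h := D2_SL (bb y) (G := fun x => D2 (S (bb q)) (fun r s => B (bb r) (x * bb s))).
    rewrite /= in h; rewrite h; last first.
      apply: islin_D2F => r s c x z.
      by rewrite mulrDl -scalerAl (bilinR hB).
    by congr (_ *: _); apply: D2_ext => r s; rewrite mul1r.
  rewrite (D2_ext _ e').
  rewrite (D2_funL a (F := fun x => D2 (S x) (fun r s => B (bb r) (bb s)))) //.
  by move=> c x y; rewrite linearD linearZ /=; exact: islin_D2a.
by rewrite -eA eB.
Qed.


Lemma D2_islin (V W : lmodType k) (h : V -> W) a (F : I -> I -> V) : islin h ->
  h (D2 a F) = D2 a (fun i j => h (F i j)).
Proof.
move=> hh; rewrite /D2 islin_sum //; apply: eq_bigr => i _.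
by rewrite islin_sum //; apply: eq_bigr => j _; rewrite islinZ.
Qed.

Section Integrals.
Variables (L : A) (lam : 'Hom(A, k^o)).
Hypotheses (hL : left_integral H L) (hlam : right_integral_dual H lam) (hnorm : lam L = 1).

Lemma R1 x : D2 x (fun i j => lam (bb i) *: bb j) = lam x *: 1.
Proof.
apply: eq_co => q.
have := hlam (@linfun _ A k^o (coord hb q)) x; rewrite !lfunE /= => e.
rewrite linearZ /= [X in _ = X]mulrC -e.
rewrite /D2 linear_sum; apply: eq_bigr => i _; rewrite linear_sum; apply: eq_bigr => j _.
by rewrite lfunE !linearZ /= mulrA.
Qed.

Lemma islin_lamL (y : A) (v : A) : islin (fun x => lam (y * x) *: v).
Proof. by move=> c x z; rewrite mulrDr -scalerAr linearD linearZ /= scalerDl scalerA. Qed.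

Lemma islin_lamR (y : A) (v : A) : islin (fun x => lam (x * y) *: v).
Proof. by move=> c x z; rewrite mulrDl -scalerAl linearD linearZ /= scalerDl scalerA. Qed.

Lemma islin_lamV (y : A) (v : A) : islin (fun x => lam y *: (x * v)).
Proof. by move=> c x z; rewrite mulrDl -scalerAl scalerDr !scalerA mulrC. Qed.

Lemma islin_lamV' (y : A) (v : A) : islin (fun x => lam y *: (v * x)).
Proof. by move=> c x z; rewrite mulrDr -scalerAr scalerDr !scalerA mulrC. Qed.

Lemma F4 a : D2 L (fun p q => lam (S (bb q) * a) *: bb p) =
  a * D2 L (fun p q => lam (S (bb q)) *: bb p).
Proof.
pose E := D2 a (fun i j => D2 (bb i * L) (fun p q => lam (S (bb q) * bb j) *: bb p)).
have e1 : E = D2 L (fun p q => lam (S (bb q) * a) *: bb p).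
  rewrite /E (D2_ext _ (fun i j => congr1 (fun z => D2 z (fun p q => lam (S (bb q) * bb j) *: bb p)) (hL (bb i)))).
  rewrite (D2_ext _ (fun i j => D2_in_scale (ep (bb i)) L (fun p q => lam (S (bb q) * bb j) *: bb p))).
  rewrite (D2_funL a (F := fun x => D2 L (fun p q => lam (S (bb q) * x) *: bb p))) //.
  by apply: islin_D2F => p q; apply: islin_lamL.
have e2 : E = D2 L (fun p q => lam (S (bb q)) *: (a * bb p)).
  rewrite /E.
  rewrite (D2_ext _ (fun i j => D2_mul (bb i) L (B := fun u v => lam (S v * bb j) *: u) _)); last first.
    move=> i j; apply: bilin_of => [w | w] c x z /=.
      by rewrite scalerDr !scalerA mulrC.
    by rewrite linearD linearZ /= mulrDl -scalerAl linearD linearZ /= scalerDl scalerA.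
  have e : forall j u v : I, D2 L (fun u' v' => lam (S (bb v * bb v') * bb j) *: (bb u * bb u'))
     = D2 L (fun u' v' => lam (S (bb v') * (S (bb v) * bb j)) *: (bb u * bb u')).
    by move=> j u v; apply: D2_ext => u' v'; rewrite S_mul mulrA.
  rewrite (D2_ext _ (fun i j => D2_ext _ (fun u v => e j u v))).
  rewrite (D2_coassoc a (fun u v j => D2 L (fun u' v' => lam (S (bb v') * (S (bb v) * bb j)) *: (bb u * bb u')))).
  have e' : forall u w : I, D2 (bb w) (fun v j => D2 L (fun u' v' =>
      lam (S (bb v') * (S (bb v) * bb j)) *: (bb u * bb u'))) =
      ep (bb w) *: D2 L (fun u' v' => lam (S (bb v')) *: (bb u * bb u')).
    move=> u w.
    have h := D2_SL (bb w) (G := fun y => D2 L (fun u' v' => lam (S (bb v') * y) *: (bb u * bb u')))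
      (islin_D2F L (fun u' v' => islin_lamL _ _)).
    by rewrite /= in h; rewrite h; congr (_ *: _); apply: D2_ext => u' v'; rewrite mulr1.
  rewrite (D2_ext _ e') (D2_fun a (F := fun x => D2 L (fun u' v' => lam (S (bb v')) *: (x * bb u')))) //.
  by apply: islin_D2F => u' v'; apply: islin_lamV.
rewrite -e1 e2 (D2_islin (h := fun y => a * y)); last by solve_lin.
by apply: D2_ext => p q; rewrite scalerAr.
Qed.

Lemma islin_lamS (y : A) (v : A) : islin (fun x => lam (S x * y) *: v).
Proof. by move=> c x z; rewrite linearD linearZ /= mulrDl -scalerAl linearD linearZ /= scalerDl scalerA. Qed.

Lemma bilin_lam : bilin (fun p q => lam p *: q).
Proof.
apply: bilin_of => [w | w] c x z /=.
  by rewrite linearD linearZ /= scalerDl scalerA.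
by rewrite scalerDr !scalerA mulrC.
Qed.

Lemma K1 a x : D2 a (fun i j => lam (S (bb j) * x) *: bb i) =
  D2 x (fun i j => lam (S a * bb i) *: bb j).
Proof.
have e : forall i j : I, lam (S (bb j) * x) *: bb i =
    D2 (bb j) (fun u v => D2 x (fun u' v' => lam (S (bb v) * bb u') *: (bb i * S (bb u) * bb v'))).
  move=> i j.
  rewrite -[bb i in LHS]mulr1 scalerAr -R1.
  rewrite (D2_mul _ _ (B := fun p q => lam p *: q)); last exact: bilin_lam.
  rewrite (D2_S _ (B := fun u v => D2 x (fun u' v' => lam (u * bb u') *: (v * bb v')))); last first.
    apply: bilin_of => [w | w].
      by apply: islin_D2F => u' v'; apply: islin_lamR.
    by apply: islin_D2F => u' v'; apply: islin_lamV.
  rewrite (D2_islin (h := fun y => bb i * y)); last by solve_lin.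
  apply: D2_ext => u v; rewrite (D2_islin (h := fun y => bb i * y)); last by solve_lin.
  by apply: D2_ext => u' v'; rewrite -scalerAr !mulrA.
rewrite (D2_ext _ e).
rewrite -(D2_coassoc a (fun i u v => D2 x (fun u' v' => lam (S (bb v) * bb u') *: (bb i * S (bb u) * bb v')))).
have e' : forall t v : I, D2 (bb t) (fun i u => D2 x (fun u' v' =>
    lam (S (bb v) * bb u') *: (bb i * S (bb u) * bb v'))) =
    ep (bb t) *: D2 x (fun u' v' => lam (S (bb v) * bb u') *: bb v').
  move=> t v.
  have h := D2_SR (bb t) (G := fun y => D2 x (fun u' v' => lam (S (bb v) * bb u') *: (y * bb v')))
      (islin_D2F x (fun u' v' => islin_lamV _ _)).
  by rewrite /= in h; rewrite h; congr (_ *: _); apply: D2_ext => u' v'; rewrite mul1r.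
rewrite (D2_ext _ e') (D2_funL a (F := fun z => D2 x (fun u' v' => lam (S z * bb u') *: bb v'))) //.
by apply: islin_D2F => u' v'; apply: islin_lamS.
Qed.

Lemma D2_zero (V : lmodType k) a : D2 a (fun i j => (0 : V)) = 0.
Proof. by rewrite /D2 big1 // => i _; rewrite big1 // => j _; rewrite scaler0. Qed.

Lemma S_inj a : S a = 0 -> a = 0.
Proof.
move=> Sa0.
have e0 : forall y : A, D2 a (fun i j => lam (S (bb j) * y) *: bb i) = 0.
  move=> y; rewrite K1 Sa0.
  have -> : D2 y (fun i j => lam (0 * bb i) *: bb j) = D2 y (fun i j => (0:A)).
    by apply: D2_ext => i j; rewrite mul0r linear0 scale0r.
  exact: D2_zero.
pose E := D2 a (fun i j => D2 (bb i) (fun u v => lam (S (bb j) * S (S (bb v)) * L) *: bb u)).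
have e1 : E = a.
  rewrite /E (D2_coassoc a (fun u v j => lam (S (bb j) * S (S (bb v)) * L) *: bb u)).
  have e : forall u w : I, D2 (bb w) (fun v j => lam (S (bb j) * S (S (bb v)) * L) *: bb u)
     = ep (bb w) *: bb u.
    move=> u w.
    have h := D2_SL (bb w) (G := fun y => lam (S y * L) *: bb u) (islin_lamS _ _).
    rewrite /= S1 mul1r hnorm scale1r in h; rewrite -h.
    by apply: D2_ext => v j; rewrite S_mul.
  by rewrite (D2_ext _ e) (D2_fun a (F := id)) //; solve_lin.
pose h (p : I) (y : A) := D2 y (fun u v => co p (bb v) *: bb u).
have hl : forall p, islin (h p) by move=> p; exact: islin_D2a.
have e : forall i j : I, D2 (bb i) (fun u v => lam (S (bb j) * S (S (bb v)) * L) *: bb u) =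
   \sum_(p : I) lam (S (bb j) * (S (S (bb p)) * L)) *: h p (bb i).
  move=> i j.
  have ex : forall v : I, lam (S (bb j) * S (S (bb v)) * L) =
     \sum_(p : I) co p (bb v) * lam (S (bb j) * (S (S (bb p)) * L)).
    move=> v; rewrite -mulrA.
    apply: (islin_expand (bb v) (G := fun y => lam (S (bb j) * (S (S y) * L)) : k^o)).
    by move=> c x z; rewrite !linearD !linearZ /= !mulrDl !mulrDr -!scalerAl -!scalerAr linearD linearZ.
  rewrite /h; under [RHS]eq_bigr do rewrite -D2_scale.
  rewrite -D2_sumF; apply: D2_ext => u v; rewrite ex scaler_suml.
  by apply: eq_bigr => p _; rewrite scalerA mulrC.
have e2 : E = 0.
  rewrite /E (D2_ext _ e) D2_sumF big1 // => p _.
  transitivity (h p (D2 a (fun i j => lam (S (bb j) * (S (S (bb p)) * L)) *: bb i))).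
    rewrite (D2_islin a _ (hl p)); apply: D2_ext => i j.
    by rewrite (islinZ (hl p)).
  by rewrite e0 (islin0 (hl p)).
by rewrite -e1 e2.
Qed.

Lemma T1 : D2 L (fun p q => lam (S (bb q)) *: bb p) = 1.
Proof.
set T := D2 L (fun p q => lam (S (bb q)) *: bb p).
set c := lam (S L).
have hS2 : S (S T) = c *: 1.
  have h := R1 (S L).
  rewrite (D2_S _ (B := fun u v => lam u *: v)) in h; last exact: bilin_lam.
  have := congr1 S h; rewrite linearZ /= S1 => <-.
  rewrite /T (D2_islin L _ (islin_lin S)) (D2_islin L _ (islin_lin S)).
  rewrite (D2_islin L _ (islin_lin S)).
  by apply: D2_ext => p q; rewrite !linearZ.
have hT : T = c *: 1.
  apply/eqP; rewrite -subr_eq0; apply/eqP; apply: S_inj; apply: S_inj.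
  rewrite !linearB !linearZ /= S1 S1 hS2.
by rewrite scalerN subrr.
have LT : L * T = L.
  rewrite /T -F4.
  rewrite -[RHS](D2_fun L (F := id)); last by solve_lin.
  apply: D2_ext => p q; rewrite hL linearZ /= hnorm ep_S.
  by rewrite -[_ *: 1]/(_ * 1) mulr1.
rewrite hT in LT.
have c1 : c = 1.
  apply/eqP; rewrite -subr_eq0; apply/eqP.
  have : (c - 1) *: L = 0 by rewrite scalerBl scale1r -{2}LT -scalerAr mulr1 subrr.
  move/eqP; rewrite scaler_eq0 => /orP [/eqP // | /eqP L0].
  by move: hnorm; rewrite L0 linear0 => /eqP; rewrite eq_sym oner_eq0.
by rewrite hT c1 scale1r.
Qed.

Lemma dualb a : D2 L (fun p q => lam (S (bb q) * a) *: bb p) = a.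
Proof. by rewrite F4 T1 mulr1. Qed.

Lemma trace_formula (f : A -> A) : islin f ->
  trace f = D2 L (fun p q => (lam (S (bb q) * f (bb p)) : k^o)).
Proof.
move=> hf; rewrite /trace.
transitivity (\sum_(i < d) D2 L (fun p q => (lam (S (bb q) * bb i) * co i (f (bb p)) : k^o))).
  apply: eq_bigr => i _.
  have hc : islin (fun y : A => (co i y : k^o)) by move=> c x y; rewrite linearD linearZ.
  rewrite -{1}(dualb (bb i)) (D2_islin L _ hf) (D2_islin L _ hc).
  by apply: (@D2_ext k^o) => p q; rewrite (islinZ hf) linearZ.
rewrite -D2_sumF; apply: (@D2_ext k^o) => p q.
rewrite (islin_expand (f (bb p)) (G := fun y => (lam (S (bb q) * y) : k^o))); last first.
  by move=> c x z; rewrite mulrDr -scalerAr linearD linearZ.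
by apply: eq_bigr => i _; rewrite mulrC.
Qed.

End Integrals.


Local Notation sw := (sweedler H).

Lemma swS n a F : sw n.+1 a F = D2 a (fun i j => sw n (bb i) (fun s => F (rcons s (bb j)))).
Proof. by []. Qed.

Lemma sw0 a F : sw 0 a F = ep a *: F [::].
Proof. by []. Qed.

Lemma sw_ext n a F G : (forall s, size s = n -> F s = G s) -> sw n a F = sw n a G.
Proof.
elim: n a F G => [|n IH] a F G e; first by rewrite !sw0 e.
rewrite !swS; apply: D2_ext => i j; apply: IH => s hs.
by apply: e; rewrite size_rcons hs.
Qed.

Lemma sw_islin n (h : A -> A) a F : islin h -> h (sw n a F) = sw n a (fun s => h (F s)).
Proof.
elim: n a F => [|n IH] a F hh; first by rewrite !sw0 islinZ.
rewrite !swS (D2_islin a _ hh); apply: D2_ext => i j; exact: IH.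
Qed.

Lemma sw_lin n F : islin (fun a => sw n a F).
Proof.
case: n => [|n] c x y /=; last exact: islin_D2a.
by rewrite linearD linearZ /= scalerDl scalerA.
Qed.

Lemma sw_first n a F : sw n.+1 a F = D2 a (fun i j => sw n (bb j) (fun s => F (bb i :: s))).
Proof.
elim: n a F => [|n IH] a F.
  by rewrite swS (D2_ext _ (fun i j => sw0 _ _)) (D2_ext _ (fun i j => sw0 (bb j) _)) D2_epL D2_epR.
rewrite swS (D2_ext _ (fun i j => IH (bb i) _)).
rewrite (D2_coassoc a (fun u v j => sw n (bb v) (fun s => F (bb u :: rcons s (bb j))))).
by apply: D2_ext => i j; rewrite swS.
Qed.


Section Tau.
Variable tau : 'End(A).
Hypothesis htau : hopf_aut H tau.

Local Notation tp n x := (twisted_power H n tau x).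
Definition Pt n a := sw n a (fun s => \prod_(l < n) taupow tau (n - l) (nth 0 s l)).

Lemma tauM x y : tau (x * y) = tau x * tau y.
Proof. by case: htau. Qed.

Lemma tau1 : tau 1 = 1.
Proof. by case: htau. Qed.

Lemma tau_prod n (f : 'I_n -> A) : tau (\prod_(l < n) f l) = \prod_(l < n) tau (f l).
Proof. exact: (big_morph tau tauM tau1). Qed.

Lemma tp_rec n x : tp n.+1 x = D2 x (fun i j => bb i * tau (tp n (bb j))).
Proof.
rewrite /twisted_power sw_first; apply: D2_ext => i j.
rewrite (sw_islin _ (h := fun y => bb i * tau y)); last by solve_lin.
apply: sw_ext => s _; rewrite big_ord_recl /= tau_prod; by congr (_ * _).
Qed.

Lemma Pt_rec n a : Pt n.+1 a = tau (D2 a (fun i j => Pt n (bb i) * bb j)).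
Proof.
rewrite /Pt swS (D2_islin a _ (islin_lin tau)); apply: D2_ext => i j.
rewrite (sw_islin _ (h := fun y => y * bb j)); last by solve_lin.
rewrite [RHS](sw_islin n (h := fun y => tau y) (bb i)); last exact: islin_lin.
apply: sw_ext => s hs; rewrite big_ord_recr /= tauM tau_prod.
congr (_ * _).
  apply: eq_bigr => l _; rewrite nth_rcons hs ltn_ord subSn; last exact: ltnW.
  by rewrite /taupow iterS.
by rewrite nth_rcons hs ltnn eqxx subSn // subnn.
Qed.

Lemma tp_lin n : islin (fun x => tp n x).
Proof. exact: sw_lin. Qed.

Lemma main n a : S (D2 a (fun i j => Pt n (bb i) * bb j)) = tp n.+1 (S a).
Proof.
elim: n a => [|n IH] a.
  rewrite tp_rec.
  transitivity (S a).
    congr (S _); rewrite -[RHS](D2_funL a (F := id)) //.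
    by apply: D2_ext => i j; rewrite /Pt sw0 big_ord0 -scalerAl mul1r.
  rewrite -[LHS](D2_fun (S a) (F := id)) //.
  apply: D2_ext => i j.
  by rewrite /twisted_power sw0 big_ord0 linearZ /= tau1 -scalerAr mulr1.
rewrite (D2_islin a _ (islin_lin S)).
rewrite (D2_ext _ (fun i j => S_mul _ _)).
rewrite (D2_ext _ (fun i j => congr1 (fun z => S (bb j) * S z) (Pt_rec n (bb i)))).
rewrite (D2_ext _ (fun i j => congr1 (fun z => S (bb j) * z) (esym (tau_S (D2 (bb i) (fun u v => Pt n (bb u) * bb v)) htau)))).
rewrite (D2_ext _ (fun i j => congr1 (fun z => S (bb j) * tau z) (IH (bb i)))).
rewrite tp_rec (D2_S _ (B := fun u v => u * tau (tp n.+1 v))) //.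
apply: bilin_of => [w | w]; first by solve_lin.
move=> c x y /=; rewrite (tp_lin n.+1) linearD linearZ /= mulrDr -scalerAr.
by [].
Qed.

End Tau.

End HopfProof.

Theorem theorem5p1 (k : fieldType) (A : falgType k) (H : hopf_data A)
  (hH : is_hopf H) (tau : 'End(A)) (htau : hopf_aut H tau)
  (m : nat) (hm : (0 < m)%N) (hord : forall a : A, iter m tau a = a)
  (L : A) (hL : left_integral H L)
  (lam : 'Hom(A, k^o)) (hlam : right_integral_dual H lam)
  (hnorm : lam L = 1) :
  twisted_FS_indicator H m tau = lam (twisted_power H m tau (antipode H L)).
Proof.
case: m hm hord => // n _ _.
rewrite /twisted_FS_indicator (trace_formula hH hL hlam hnorm); last first.
  move=> c x y; rewrite /Ptau /=.
  by rewrite (sw_lin H n.+1.-1) linearD linearZ.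
rewrite -(main hH htau n L).
rewrite (D2_islin H (h := fun y => (lam (antipode H y) : k^o)) L); last first.
  by move=> c x y; rewrite !linearD !linearZ.
apply: (@D2_ext _ _ H k^o) => p q /=.
by rewrite S_mul.
Qed.
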